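(* For every non-empty list $\Omega$ of atoms, the posets $\mathrm{Frm}_\Omega$ and $\mathrm{Ctx}_\Omega$ are lattices.
   Context: Formulas are built from atoms ($p,q,\dots$) by a binary product: every formula is an atom or $A\bullet B$. A context is a finite (possibly empty) list of formulas; commas denote concatenation. The frontier $\mathrm{fr}$ of a formula is its ordered list of atom occurrences: $\mathrm{fr}(p)=p$, $\mathrm{fr}(A\bullet B)=\mathrm{fr}(A),\mathrm{fr}(B)$; the frontier of a context is the concatenation of the frontiers of its formulas. The sequent calculus has exactly four rules (no weakening, contraction or exchange): ($\bullet L$) from $A,B,\Delta\vdash C$ infer $A\bullet B,\Delta\vdash C$ (the product must be leftmost); ($\bullet R$) from $\Gamma\vdash A$ and $\Delta\vdash B$ infer $\Gamma,\Delta\vdash A\bullet B$; ($id$) $A\vdash A$; ($cut$) from $\Theta\vdash A$ and $\Gamma,A,\Delta\vdash B$ infer $\Gamma,\Theta,\Delta\vdash B$; derivable means conclusion of a finite derivation tree with no undischarged premises. The Tamari order $\le$ on formulas is the least preorder with $(A\bullet B)\bullet C\le A\bullet(B\bullet C)$ and $A_1\le A_2$, $B_1\le B_2$ implying $A_1\bullet B_1\le A_2\bullet B_2$. The substitution order on contexts is the least relation $\le$ such that: (1) if $\Gamma\vdash A$ is derivable then $\Gamma\le A$ (the one-element context); (2) $\cdot\le\cdot$ for the empty context; (3) if $\Gamma_1\le\Gamma_2$ and $\Theta_1\le\Theta_2$ then $(\Gamma_1,\Theta_1)\le(\Gamma_2,\Theta_2)$. $\mathrm{Frm}_\Omega$ is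 the set of formulas with frontier $\Omega$ under the Tamari order, and $\mathrm{Ctx}_\Omega$ is the set of contexts with frontier $\Omega$ under the substitution order. *)

(* Defs.v *)
From Stdlib Require Import List.
Import ListNotations.
Set Implicit Arguments.

Section Defs.
Variable Atom : Type.

Inductive formula : Type :=
| At : Atom -> formula
| Prod : formula -> formula -> formula.

Definition context := list formula.

Fixpoint fr (F : formula) : list Atom :=
  match F with
  | At p => [p]
  | Prod A B => fr A ++ fr B
  end.

Definition frc (G : context) : list Atom := flat_map fr G.

Inductive derivable : context -> formula -> Prop :=
| d_prodL : forall A B D C,
    derivable (A :: B :: D) C -> derivable (Prod A B :: D) C
| d_prodR : forall G D A B,
    derivable G A -> derivable D B -> derivable (G ++ D) (Prod A B)
| d_id : forall A, derivable [A] A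
| d_cut : forall Th A G D B,
    derivable Th A -> derivable (G ++ A :: D) B -> derivable (G ++ Th ++ D) B.

Inductive tamari : formula -> formula -> Prop :=
| t_refl : forall A, tamari A A
| t_trans : forall A B C, tamari A B -> tamari B C -> tamari A C
| t_assoc : forall A B C, tamari (Prod (Prod A B) C) (Prod A (Prod B C))
| t_mono : forall A1 A2 B1 B2,
    tamari A1 A2 -> tamari B1 B2 -> tamari (Prod A1 B1) (Prod A2 B2).

Inductive subst_le : context -> context -> Prop :=
| s_deriv : forall G A, derivable G A -> subst_le G [A]
| s_nil : subst_le [] []
| s_app : forall G1 G2 T1 T2,
    subst_le G1 G2 -> subst_le T1 T2 -> subst_le (G1 ++ T1) (G2 ++ T2).

End Defs.

Definition is_lattice {T : Type} (X : T -> Prop) (le : T -> T -> Prop) : Prop :=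
  (forall x, X x -> le x x) /\
  (forall x y, X x -> X y -> le x y -> le y x -> x = y) /\
  (forall x y z, X x -> X y -> X z -> le x y -> le y z -> le x z) /\
  (forall x y, X x -> X y ->
     exists m, X m /\ le m x /\ le m y /\
       (forall z, X z -> le z x -> le z y -> le z m)) /\
  (forall x y, X x -> X y ->
     exists j, X j /\ le x j /\ le y j /\
       (forall z, X z -> le x z -> le y z -> le j z)).

Definition Frm {Atom : Type} (Om : list Atom) : formula Atom -> Prop :=
  fun F => fr F = Om.
Definition Ctx {Atom : Type} (Om : list Atom) : context Atom -> Prop :=
  fun G => frc G = Om.

(* Main.v *)
Require Import Defs.
From Stdlib Require Import List Arith Lia.
Import ListNotations.

Lemma app_len_inv : forall (T : Type) (l1 l2 l1' l2' : list T),
  length l1 = length l1' -> l1 ++ l2 = l1' ++ l2' -> l1 = l1' /\ l2 = l2'.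
Proof.
  intros T l1; induction l1 as [|x l1 IH]; intros l2 l1' l2' Hl He;
    destruct l1' as [|y l1']; simpl in *; try discriminate; auto.
  injection He as -> He. destruct (IH l2 l1' l2') as [-> ->]; auto.
Qed.

Lemma F2_split : forall (A B : Type) (R : A -> B -> Prop) a1 a2 b1 b2,
  length a1 = length b1 -> Forall2 R (a1 ++ a2) (b1 ++ b2) ->
  Forall2 R a1 b1 /\ Forall2 R a2 b2.
Proof.
  intros A B R a1; induction a1 as [|x a1 IH]; intros a2 b1 b2 Hl H;
    destruct b1 as [|y b1]; simpl in *; try discriminate.
  - split; auto.
  - inversion H; subst. destruct (IH a2 b1 b2) as [H1 H2]; auto.
Qed.

Lemma F2_cons : forall (A B : Type) (R : A -> B -> Prop) x y a b,
  Forall2 R (x :: a) (y :: b) -> R x y /\ Forall2 R a b.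
Proof. intros. inversion H; subst; auto. Qed.

Lemma F2_refl : forall l : list nat, Forall2 le l l.
Proof. induction l; constructor; auto. Qed.

Lemma F2_trans : forall a b c : list nat, Forall2 le a b -> Forall2 le b c -> Forall2 le a c.
Proof.
  intros a b c H; revert c; induction H; intros c H'; inversion H'; subst; constructor.
  lia. auto.
Qed.

Lemma F2_antisym : forall a b : list nat, Forall2 le a b -> Forall2 le b a -> a = b.
Proof.
  intros a b H; induction H; intros H'; inversion H'; subst; auto.
  f_equal; auto. lia.
Qed.

Lemma F2_tl : forall a b : list nat, Forall2 le a b -> Forall2 le (tl a) (tl b).
Proof. intros a b H; destruct H; simpl; auto. Qed.

Fixpoint bnd (l : list nat) : Prop :=
  match l with [] => True | x :: l' => x <= S (length l') /\ bnd l' end.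

Fixpoint fv (l : list nat) : Prop :=
  match l with
  | [] => True
  | x :: l' => 1 <= x /\ x <= S (length l') /\ bnd (firstn (x - 1) l') /\ fv l'
  end.

Fixpoint zmin (a b : list nat) : list nat :=
  match a, b with
  | x :: a', y :: b' => Nat.min x y :: zmin a' b'
  | _, _ => []
  end.

Lemma bnd_app : forall a b, bnd a -> bnd b -> bnd (a ++ b).
Proof.
  induction a as [|x a IH]; simpl; auto. intros b [H1 H2] Hb.
  split; [rewrite length_app; lia | auto].
Qed.

Lemma bnd_tl : forall l, bnd l -> bnd (tl l).
Proof. destruct l; simpl; tauto. Qed.

Lemma bnd_skipn : forall k l, bnd l -> bnd (skipn k l).
Proof. induction k; destruct l; simpl; intuition. Qed.

Lemma bnd_le : forall a b, Forall2 le a b -> bnd b -> bnd a.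
Proof.
  intros a b H; induction H; simpl; auto. intros [H1 H2].
  apply Forall2_length in H0. split; [lia | auto].
Qed.

Lemma fv_skipn : forall k l, fv l -> fv (skipn k l).
Proof. induction k; destruct l; simpl; intuition. Qed.

Lemma fv_app : forall a b, fv a -> bnd a -> fv b -> fv (a ++ b).
Proof.
  induction a as [|x a IH]; simpl; auto.
  intros b [h1 [h2 [h3 h4]]] [g1 g2] Hb.
  repeat split; auto.
  - rewrite length_app; lia.
  - rewrite firstn_app. replace (x - 1 - length a) with 0 by lia. simpl.
    rewrite app_nil_r. auto.
Qed.

Lemma fv_prefix : forall l k, fv l -> bnd (firstn k l) -> fv (firstn k l).
Proof.
  induction l as [|x l IH]; intros k; destruct k; simpl; auto.
  intros [h1 [h2 [h3 h4]]] [g1 g2]. repeat split; auto.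
  rewrite firstn_firstn. rewrite length_firstn in g1.
  replace (Nat.min (x - 1) k) with (x - 1) by lia. auto.
Qed.

Lemma length_zmin : forall a b, length (zmin a b) = Nat.min (length a) (length b).
Proof. induction a; destruct b; simpl; auto. Qed.

Lemma firstn_zmin : forall k a b, firstn k (zmin a b) = zmin (firstn k a) (firstn k b).
Proof. induction k; destruct a; destruct b; simpl; auto. f_equal; auto. Qed.

Lemma zmin_le_l : forall a b, length a = length b -> Forall2 le (zmin a b) a.
Proof.
  induction a; destruct b; simpl; intros; try discriminate; constructor; auto. lia.
Qed.

Lemma zmin_le_r : forall a b, length a = length b -> Forall2 le (zmin a b) b.
Proof.
  induction a; destruct b; simpl; intros; try discriminate; constructor; auto. lia.
Qed.

Lemma zmin_glb : forall c a b, Forall2 le c a -> Forall2 le c b -> Forall2 le c (zmin a b).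
Proof.
  intros c a b H; revert b; induction H; intros b' H'; inversion H'; subst; simpl; constructor; auto.
  lia.
Qed.

Lemma fv_min : forall a b, length a = length b -> fv a -> fv b -> fv (zmin a b).
Proof.
  induction a as [|x a IH]; destruct b as [|y b]; simpl; auto; intros Hl; try discriminate.
  intros [h1 [h2 [h3 h4]]] [g1 [g2 [g3 g4]]].
  repeat split; auto; try lia.
  - rewrite length_zmin; lia.
  - rewrite firstn_zmin.
    destruct (Nat.le_ge_cases x y).
    + replace (Nat.min x y - 1) with (x - 1) by lia.
      apply bnd_le with (firstn (x-1) a); auto. apply zmin_le_l.
      rewrite !length_firstn; lia.
    + replace (Nat.min x y - 1) with (y - 1) by lia.
      apply bnd_le with (firstn (y-1) b); auto. apply zmin_le_r.
      rewrite !length_firstn; lia.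
Qed.

Section Dev.
Variable Atom : Type.
Notation F := (formula Atom).
Notation tam := (@tamari Atom).

Definition lfold (X : F) (Cs : list F) : F := fold_left (@Prod Atom) Cs X.

Lemma lfold_cons : forall X C Cs, lfold X (C :: Cs) = lfold (Prod X C) Cs.
Proof. reflexivity. Qed.
Lemma lfold_app : forall X l1 l2, lfold X (l1 ++ l2) = lfold (lfold X l1) l2.
Proof. intros; unfold lfold; apply fold_left_app. Qed.

Fixpoint vec (A : F) : list nat :=
  match A with
  | At _ => [1]
  | Prod A B => (length (fr A) + length (fr B)) :: tl (vec A) ++ vec B
  end.

Notation code := (flat_map vec).
Notation frs := (flat_map (@fr Atom)).

Lemma fr_nonnil : forall A : F, length (fr A) >= 1.
Proof. induction A; simpl; [lia | rewrite length_app; lia]. Qed.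

Lemma v_head : forall A : F, vec A = length (fr A) :: tl (vec A).
Proof. destruct A; simpl; auto. rewrite length_app; auto. Qed.

Lemma len_tl_v : forall A : F, S (length (tl (vec A))) = length (fr A).
Proof.
  induction A as [p|A IHA B IHB]; simpl; auto.
  rewrite length_app, length_app. 
  assert (length (vec B) = length (fr B)).
  { rewrite (v_head B). simpl. auto. }
  lia.
Qed.

Lemma v_len : forall A : F, length (vec A) = length (fr A).
Proof. intros. rewrite (v_head A) at 1. simpl. apply len_tl_v. Qed.

Lemma code_len : forall G, length (code G) = length (frs G).
Proof. induction G; simpl; auto. rewrite !length_app, v_len; auto. Qed.

Lemma fr_lfold : forall Cs X, fr (lfold X Cs) = fr X ++ frs Cs.
Proof.
  induction Cs as [|C Cs IH]; intros X.
  - simpl. now rewrite app_nil_r.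
  - rewrite lfold_cons, IH. simpl. now rewrite app_assoc.
Qed.

Lemma v_lfold : forall Cs X,
  vec (lfold X Cs) = (length (fr X) + length (frs Cs)) :: tl (vec X) ++ code Cs.
Proof.
  induction Cs as [|C Cs IH]; intros X.
  - simpl. rewrite Nat.add_0_r, app_nil_r. apply v_head.
  - rewrite lfold_cons, IH. simpl. rewrite !length_app. f_equal. lia.
    now rewrite app_assoc.
Qed.

Lemma spine : forall C : F, exists a Ds, C = lfold (At a) Ds.
Proof.
  induction C as [p|C1 IH1 C2 IH2].
  - exists p, []. reflexivity.
  - destruct IH1 as [a [Ds ->]]. exists a, (Ds ++ [C2]).
    rewrite lfold_app. reflexivity.
Qed.

Lemma lfold_mono : forall Cs X X', tam X X' -> tam (lfold X Cs) (lfold X' Cs).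
Proof.
  induction Cs; intros; auto. rewrite !lfold_cons. apply IHCs.
  apply t_mono; auto. apply t_refl.
Qed.

Lemma lfold_assoc : forall Cs Y Z, tam (lfold (Prod Y Z) Cs) (Prod Y (lfold Z Cs)).
Proof.
  induction Cs as [|C Cs IH]; intros. apply t_refl.
  rewrite !lfold_cons. eapply t_trans. apply lfold_mono. apply t_assoc.
  apply IH.
Qed.

Lemma tam_fr : forall A B : F, tam A B -> fr A = fr B.
Proof. intros A B H; induction H; simpl; try congruence; now rewrite app_assoc. Qed.

Lemma L1 : forall A B : F, tam A B -> Forall2 le (vec A) (vec B).
Proof.
  intros A B H; induction H as [A|A B C H1 IH1 H2 IH2|A B C|A1 A2 B1 B2 H1 IH1 H2 IH2].
  - apply F2_refl.
  - eapply F2_trans; eauto.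
  - simpl. rewrite (v_head B). simpl. rewrite !length_app.
    constructor; [lia|]. rewrite <- app_assoc. apply Forall2_app; [apply F2_refl|].
    simpl. constructor; [lia|apply F2_refl].
  - simpl. rewrite (tam_fr _ _ H1), (tam_fr _ _ H2). constructor; [lia|].
    apply Forall2_app; auto. apply F2_tl; auto.
Qed.

Lemma bnd_v : forall A : F, bnd (vec A).
Proof.
  induction A as [p|A IHA B IHB]; simpl; auto.
  split.
  - rewrite length_app, v_len. pose proof (len_tl_v A). lia.
  - apply bnd_app; auto. apply bnd_tl; auto.
Qed.

Lemma fv_v : forall A : F, fv (vec A).
Proof.
  induction A as [p|A IHA B IHB]; simpl; auto.
  assert (Hl : length (tl (vec A) ++ vec B) = length (fr A) + length (fr B) - 1).
  { rewrite length_app, v_len. pose proof (len_tl_v A). lia. }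
  pose proof (fr_nonnil A).
  repeat split; try lia.
  - rewrite firstn_all2 by lia. apply bnd_app; [apply bnd_tl|]; apply bnd_v.
  - apply fv_app. destruct (vec A); simpl in *; tauto. apply bnd_tl, bnd_v. auto.
Qed.

Lemma fv_code : forall G, fv (code G) /\ bnd (code G).
Proof.
  induction G as [|C G IH]; simpl; auto. destruct IH.
  split. apply fv_app; auto using fv_v, bnd_v. apply bnd_app; auto using bnd_v.
Qed.

Lemma SL : forall Cs M N, Forall2 le (code Cs) (M ++ N) -> bnd M ->
  exists Cs1 Cs2, Cs = Cs1 ++ Cs2 /\ length (code Cs1) = length M.
Proof.
  induction Cs as [|C Cs IH]; intros M N H HM.
  - exists [], []. simpl in *. apply Forall2_length in H. rewrite length_app in H.
    simpl in H. split; auto. lia.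
  - destruct M as [|m M'].
    + exists [], (C :: Cs). split; reflexivity.
    + simpl in H. rewrite (v_head C) in H. simpl in H. apply F2_cons in H.
      destruct H as [H3 H5].
      simpl in HM. destruct HM as [HM1 HM2].
      assert (Hk : length (tl (vec C)) <= length M') by (pose proof (len_tl_v C); lia).
      rewrite <- (firstn_skipn (length (tl (vec C))) M') in H5. rewrite <- app_assoc in H5.
      apply F2_split in H5; [| rewrite length_firstn; lia].
      destruct H5 as [_ H6].
      destruct (IH _ N H6 (bnd_skipn _ _ HM2)) as [Cs1 [Cs2 [E1 E2]]].
      exists (C :: Cs1), Cs2. split. subst; reflexivity. simpl.
      rewrite length_app, E2, length_skipn, v_len. pose proof (len_tl_v C). simpl. lia.
Qed.

Lemma L2 : forall B A : F, fr A = fr B -> Forall2 le (vec A) (vec B) -> tam A B.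
Proof.
  induction B as [q|B1 IH1 B2 IH2]; intros A Hfr Hv.
  - destruct A as [p|A1 A2]; simpl in Hfr.
    + inversion Hfr; subst; apply t_refl.
    + exfalso. pose proof (fr_nonnil A1); pose proof (fr_nonnil A2).
      apply (f_equal (@length Atom)) in Hfr. rewrite length_app in Hfr. simpl in Hfr. lia.
  - destruct (spine A) as [a [As ->]].
    rewrite v_lfold in Hv. simpl in Hv. apply F2_cons in Hv. destruct Hv as [_ Hc].
    destruct (SL As (tl (vec B1)) (vec B2) Hc (bnd_tl _ (bnd_v B1))) as [As1 [As2 [-> E]]].
    rewrite flat_map_app in Hc. apply F2_split in Hc; [|exact E]. destruct Hc as [Hc1 Hc2].
    destruct As2 as [|A' As2'].
    { exfalso. apply Forall2_length in Hc2. rewrite v_len in Hc2. simpl in Hc2.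
      pose proof (fr_nonnil B2). lia. }
    rewrite fr_lfold in Hfr. simpl in Hfr. rewrite flat_map_app in Hfr.
    change (a :: frs As1 ++ frs (A' :: As2')) with ((a :: frs As1) ++ frs (A' :: As2')) in Hfr.
    apply app_len_inv in Hfr.
    2:{ simpl. rewrite <- code_len, E. apply len_tl_v. }
    destruct Hfr as [Hf1 Hf2].
    rewrite lfold_app, lfold_cons. eapply t_trans. apply lfold_assoc.
    apply t_mono.
    + apply IH1. rewrite fr_lfold. exact Hf1.
      rewrite v_lfold, (v_head B1). simpl. constructor; auto.
      rewrite <- code_len, E. pose proof (len_tl_v B1). lia.
    + apply IH2. rewrite fr_lfold. exact Hf2.
      rewrite v_lfold, (v_head B2). simpl in Hc2. rewrite (v_head A'), (v_head B2) in Hc2.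
      simpl in Hc2. apply F2_cons in Hc2. destruct Hc2 as [_ Hc2].
      constructor; auto. rewrite <- Hf2. simpl. rewrite length_app. lia.
Qed.


Lemma build : forall As A, derivable (A :: As) (lfold A As).
Proof.
  intros As; induction As as [|x As IH] using rev_ind; intros A.
  - apply d_id.
  - rewrite lfold_app. change (A :: As ++ [x]) with ((A :: As) ++ [x]).
    apply d_prodR; auto. apply d_id.
Qed.

Lemma tam_der : forall A B : F, tam A B -> derivable [A] B.
Proof.
  intros A B H; induction H as [A|A B C H1 IH1 H2 IH2|A B C|A1 A2 B1 B2 H1 IH1 H2 IH2].
  - apply d_id.
  - exact (@d_cut Atom [A] B [] [] C IH1 IH2).
  - apply d_prodL, d_prodL.
    exact (@d_prodR Atom [A] [B;C] A (Prod B C) (d_id A) (@d_prodR Atom [B] [C] B C (d_id B) (d_id C))).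
  - apply d_prodL. exact (@d_prodR Atom [A1] [B1] A2 B2 IH1 IH2).
Qed.

Lemma der_of_tam : forall A As C, tam (lfold A As) C -> derivable (A :: As) C.
Proof.
  intros A As C H. pose proof (tam_der _ _ H) as H0.
  rewrite <- (app_nil_r (A :: As)).
  exact (@d_cut Atom (A :: As) (lfold A As) [] [] C (build As A) H0).
Qed.

Lemma der_tam : forall G C, derivable G C ->
  match G with [] => False | A :: As => tam (lfold A As) C end.
Proof.
  intros G C H.
  induction H as [A B D C H IH | G D A B H1 IH1 H2 IH2 | A | Th A G D B H1 IH1 H2 IH2].
  - exact IH.
  - destruct G as [|g G]; [contradiction|]. destruct D as [|d D]; [contradiction|].
    simpl. rewrite lfold_app, lfold_cons. eapply t_trans. apply lfold_assoc.
    apply t_mono; assumption.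
  - apply t_refl.
  - destruct Th as [|t Th]; [contradiction|].
    destruct G as [|g G].
    + simpl in *. rewrite lfold_app.
      eapply t_trans; [apply lfold_mono; exact IH1 | exact IH2].
    + simpl in *. rewrite lfold_app in *.
      change (t :: Th ++ D) with ((t :: Th) ++ D). rewrite lfold_app.
      rewrite lfold_cons in IH2.
      eapply t_trans; [apply lfold_mono | exact IH2].
      rewrite lfold_cons. eapply t_trans; [apply lfold_assoc|].
      apply t_mono; [apply t_refl | exact IH1].
Qed.

Lemma sub_to : forall G D, subst_le G D -> frs G = frs D /\ Forall2 le (code G) (code D).
Proof.
  intros G D H; induction H as [G A H | | G1 G2 T1 T2 H1 IH1 H2 IH2].
  - pose proof (der_tam _ _ H) as T. destruct G as [|g G]; [contradiction|].
    pose proof (tam_fr _ _ T) as Hf. pose proof (L1 _ _ T) as Hv.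
    rewrite fr_lfold in Hf. rewrite v_lfold in Hv. split.
    + simpl. rewrite app_nil_r. exact Hf.
    + simpl. rewrite app_nil_r. refine (F2_trans _ _ _ _ Hv).
      rewrite (v_head g). simpl. constructor; [lia|apply F2_refl].
  - split; constructor.
  - destruct IH1, IH2. rewrite !flat_map_app. split; [congruence | apply Forall2_app; auto].
Qed.

Lemma sub_of : forall D G, frs G = frs D -> Forall2 le (code G) (code D) -> subst_le G D.
Proof.
  induction D as [|B D IH]; intros G Hf Hv.
  - destruct G as [|g G]. apply s_nil. exfalso. simpl in Hf.
    pose proof (fr_nonnil g). destruct (fr g); simpl in *; [lia | discriminate].
  - simpl in Hv.
    destruct (SL G (vec B) (code D) Hv (bnd_v B)) as [G1 [G2 [-> E]]].
    rewrite flat_map_app in Hv. apply F2_split in Hv; [|exact E]. destruct Hv as [Hv1 Hv2].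
    simpl in Hf; rewrite flat_map_app in Hf.
    apply app_len_inv in Hf; [| rewrite <- code_len, E, v_len; reflexivity].
    destruct Hf as [Hf1 Hf2].
    change (B :: D) with ([B] ++ D). apply s_app; [| apply IH; auto].
    apply s_deriv. destruct G1 as [|A As].
    { exfalso. simpl in E. rewrite v_len in E. pose proof (fr_nonnil B). lia. }
    apply der_of_tam. apply L2.
    + rewrite fr_lfold. exact Hf1.
    + rewrite v_lfold, (v_head B). simpl in Hv1. rewrite (v_head A), (v_head B) in Hv1.
      simpl in Hv1. apply F2_cons in Hv1. destruct Hv1 as [_ Hv1].
      constructor; auto. rewrite <- Hf1. simpl. rewrite length_app. lia.
Qed.

Lemma sub_char : forall G D, subst_le G D <-> frs G = frs D /\ Forall2 le (code G) (code D).
Proof. split. apply sub_to. intros [H1 H2]. apply sub_of; auto. Qed.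

Fixpoint dec (f : nat) (w : list nat) (om : list Atom) : list F :=
  match f with
  | 0 => []
  | S f' => match w, om with
            | x :: l, a :: om' =>
                lfold (At a) (dec f' (firstn (x - 1) l) (firstn (x - 1) om'))
                  :: dec f' (skipn (x - 1) l) (skipn (x - 1) om')
            | _, _ => []
            end
  end.

Lemma dec_ok : forall f w om, length w <= f -> fv w -> length om = length w ->
  code (dec f w om) = w /\ frs (dec f w om) = om.
Proof.
  induction f as [|f IH]; intros w om Hl Hw Ho.
  - destruct w; [|simpl in Hl; lia]. destruct om; [|discriminate]. split; reflexivity.
  - destruct w as [|x l].
    + destruct om; [|discriminate]. split; reflexivity.
    + destruct om as [|a om']; [discriminate|].
      simpl in Hw. destruct Hw as [h1 [h2 [h3 h4]]]. simpl in Hl, Ho.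
      assert (Hp : fv (firstn (x-1) l)) by (apply fv_prefix; auto).
      destruct (IH (firstn (x-1) l) (firstn (x-1) om')) as [E1 E2];
        [rewrite length_firstn; lia | exact Hp | rewrite !length_firstn; lia |].
      destruct (IH (skipn (x-1) l) (skipn (x-1) om')) as [E3 E4];
        [rewrite length_skipn; lia | apply fv_skipn; auto | rewrite !length_skipn; lia |].
      cbn [dec flat_map]. rewrite v_lfold, fr_lfold. simpl.
      rewrite E1, E2, E3, E4, length_firstn, !firstn_skipn. split; auto.
      f_equal. lia.
Qed.

Lemma firstn_la : forall (T : Type) (l1 l2 : list T) n, n = length l1 -> firstn n (l1 ++ l2) = l1.
Proof. intros; subst. induction l1; simpl; auto. f_equal; auto. Qed.
Lemma skipn_la : forall (T : Type) (l1 l2 : list T) n, n = length l1 -> skipn n (l1 ++ l2) = l2.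
Proof. intros; subst. induction l1; simpl; auto. Qed.

Lemma dec_inv : forall f Cs, length (code Cs) <= f -> dec f (code Cs) (frs Cs) = Cs.
Proof.
  induction f as [|f IH]; intros Cs Hl.
  - destruct Cs as [|C Cs]; auto. simpl in Hl. rewrite length_app, v_len in Hl.
    pose proof (fr_nonnil C). lia.
  - destruct Cs as [|C Cs]; auto.
    destruct (spine C) as [a [Ds ->]].
    simpl in Hl. rewrite length_app, v_len, fr_lfold, length_app in Hl. simpl in Hl.
    rewrite <- code_len in Hl.
    cbn [flat_map]. rewrite v_lfold, fr_lfold. simpl. rewrite Nat.sub_0_r.
    rewrite (firstn_la _ (code Ds)), (skipn_la _ (code Ds)), (firstn_la _ (frs Ds)),
      (skipn_la _ (frs Ds)); try reflexivity; try apply code_len.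
    2,3: symmetry; apply code_len.
    rewrite !IH; auto; lia.
Qed.

Lemma ctx_inj : forall G D, code G = code D -> frs G = frs D -> G = D.
Proof.
  intros G D H1 H2.
  pose proof (dec_inv (length (code G)) G (le_n _)) as E1.
  pose proof (dec_inv (length (code D)) D (le_n _)) as E2.
  rewrite H1, H2 in E1. congruence.
Qed.

Lemma frm_antisym : forall x y : F, tam x y -> tam y x -> x = y.
Proof.
  intros x y H1 H2.
  assert (Hv : vec x = vec y) by (apply F2_antisym; apply L1; auto).
  assert (Hf : fr x = fr y) by (apply tam_fr; auto).
  assert ([x] = [y]). { apply ctx_inj; simpl; rewrite ?Hv, ?Hf; auto. }
  congruence.
Qed.

Lemma frm_meet : forall (Om : list Atom) (x y : F), fr x = Om -> fr y = Om ->
  exists m, fr m = Om /\ tam m x /\ tam m y /\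
    (forall z, fr z = Om -> tam z x -> tam z y -> tam z m).
Proof.
  intros Om x y Hx Hy.
  destruct (spine x) as [a [Xs ->]]. destruct (spine y) as [b [Ys ->]].
  rewrite fr_lfold in Hx, Hy. simpl in Hx, Hy. subst Om. injection Hy as -> Hy.
  assert (Lxy : length (code Xs) = length (code Ys)) by (rewrite !code_len, Hy; auto).
  set (l := zmin (code Xs) (code Ys)).
  assert (Hfv : fv l) by (apply fv_min; auto; apply fv_code).
  assert (Ll : length (frs Xs) = length l).
  { unfold l. rewrite length_zmin, <- Lxy, code_len. lia. }
  destruct (dec_ok (length l) l (frs Xs) (le_n _) Hfv Ll) as [E1 E2].
  set (m := lfold (At a) (dec (length l) l (frs Xs))).
  assert (Vm : vec m = S (length (frs Xs)) :: l).
  { unfold m. rewrite v_lfold, E2, E1. reflexivity. }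
  assert (Fm : fr m = a :: frs Xs) by (unfold m; rewrite fr_lfold, E2; reflexivity).
  assert (Vx : vec (lfold (At a) Xs) = S (length (frs Xs)) :: code Xs) by (rewrite v_lfold; reflexivity).
  assert (Vy : vec (lfold (At a) Ys) = S (length (frs Xs)) :: code Ys) by (rewrite v_lfold, Hy; reflexivity).
  exists m. split; [exact Fm|]. split; [|split].
  - apply L2. rewrite Fm, fr_lfold; reflexivity.
    rewrite Vm, Vx. constructor; auto. apply zmin_le_l; auto.
  - apply L2. rewrite Fm, fr_lfold, Hy; reflexivity.
    rewrite Vm, Vy. constructor; auto. apply zmin_le_r; auto.
  - intros z Hz H1 H2. apply L2. rewrite Fm, Hz; reflexivity.
    apply L1 in H1. apply L1 in H2. rewrite Vx in H1. rewrite Vy in H2. rewrite Vm.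
    rewrite (v_head z) in *. apply F2_cons in H1. apply F2_cons in H2.
    destruct H1, H2. constructor; auto. apply zmin_glb; auto.
Qed.

Fixpoint mirror (A : F) : F :=
  match A with At p => At p | Prod A B => Prod (mirror B) (mirror A) end.

Lemma fr_mirror : forall A, fr (mirror A) = rev (fr A).
Proof. induction A; simpl; auto. rewrite rev_app_distr; congruence. Qed.

Lemma mirror_inv : forall A, mirror (mirror A) = A.
Proof. induction A; simpl; congruence. Qed.

Lemma tam_mirror : forall A B, tam A B -> tam (mirror B) (mirror A).
Proof.
  intros A B H; induction H; simpl.
  - apply t_refl.
  - eapply t_trans; eauto.
  - apply t_assoc.
  - apply t_mono; auto.
Qed.

Lemma frm_join : forall (Om : list Atom) (x y : F), fr x = Om -> fr y = Om ->
  exists j, fr j = Om /\ tam x j /\ tam y j /\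
    (forall z, fr z = Om -> tam x z -> tam y z -> tam j z).
Proof.
  intros Om x y Hx Hy.
  destruct (frm_meet (rev Om) (mirror x) (mirror y)) as [m [Hm [H1 [H2 H3]]]];
    try (rewrite fr_mirror; congruence).
  exists (mirror m). split; [rewrite fr_mirror, Hm, rev_involutive; auto|].
  split; [|split].
  - rewrite <- (mirror_inv x) at 1. apply tam_mirror; auto.
  - rewrite <- (mirror_inv y) at 1. apply tam_mirror; auto.
  - intros z Hz Hxz Hyz. rewrite <- (mirror_inv z). apply tam_mirror. apply H3.
    rewrite fr_mirror; congruence. apply tam_mirror; auto. apply tam_mirror; auto.
Qed.

Lemma E_sub : forall a b G D, tam (lfold (At a) G) (lfold (At b) D) -> subst_le G D.
Proof.
  intros a b G D H. apply sub_char.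
  pose proof (tam_fr _ _ H) as Hf. rewrite !fr_lfold in Hf. simpl in Hf.
  injection Hf as _ Hf. split; auto.
  apply L1 in H. rewrite !v_lfold in H. apply F2_cons in H. apply H.
Qed.

Lemma sub_E : forall a G D, subst_le G D -> tam (lfold (At a) G) (lfold (At a) D).
Proof.
  intros a G D H. apply sub_char in H. destruct H as [Hf Hv]. apply L2.
  rewrite !fr_lfold, Hf; auto.
  rewrite !v_lfold. simpl. rewrite Hf. constructor; auto.
Qed.

End Dev.

Theorem theorem2p17 : forall (Atom : Type) (Om : list Atom),
  Om <> [] ->
  is_lattice (Frm Om) (@tamari Atom) /\ is_lattice (Ctx Om) (@subst_le Atom).
Proof.
  intros Atom Om HOm. split.
  - unfold is_lattice, Frm.
    split; [intros; apply t_refl|].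
    split; [intros; eapply frm_antisym; eauto|].
    split; [intros; eapply t_trans; eauto|].
    split.
    + intros x y Hx Hy. exact (frm_meet Atom Om x y Hx Hy).
    + intros x y Hx Hy. exact (frm_join Atom Om x y Hx Hy).
  - unfold is_lattice, Ctx, frc.
    split; [intros; apply sub_char; split; [reflexivity | apply F2_refl]|].
    split.
    { intros x y _ _ H1 H2. apply sub_char in H1. apply sub_char in H2.
      destruct H1, H2. apply ctx_inj; auto. apply F2_antisym; auto. }
    split.
    { intros x y z _ _ _ H1 H2. apply sub_char in H1. apply sub_char in H2. apply sub_char.
      destruct H1, H2. split; [congruence | eapply F2_trans; eauto]. }
    split.
    + intros G D HG HD.
      set (l := zmin (flat_map (vec Atom) G) (flat_map (vec Atom) D)).
      assert (Lgd : length (flat_map (vec Atom) G) = length (flat_map (vec Atom) D))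
        by (rewrite !code_len, HG, HD; auto).
      assert (Hfv : fv l) by (apply fv_min; auto; apply fv_code).
      assert (Ll : length Om = length l).
      { unfold l. rewrite length_zmin, <- Lgd, code_len, HG. lia. }
      destruct (dec_ok Atom (length l) l Om (le_n _) Hfv Ll) as [E1 E2].
      exists (dec Atom (length l) l Om). split; [exact E2|]. split; [|split].
      * apply sub_char. split; [congruence|]. rewrite E1. apply zmin_le_l; auto.
      * apply sub_char. split; [congruence|]. rewrite E1. apply zmin_le_r; auto.
      * intros z Hz H1 H2. apply sub_char in H1. apply sub_char in H2. apply sub_char.
        destruct H1, H2. split; [congruence|]. rewrite E1. apply zmin_glb; auto.
    + intros G D HG HD. destruct Om as [|a Om']; [congruence|].
      destruct (frm_join Atom (a :: a :: Om') (lfold Atom (At a) G) (lfold Atom (At a) D))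
        as [j [Hj [H1 [H2 H3]]]]; try (rewrite fr_lfold; simpl; congruence).
      destruct (spine Atom j) as [b [Js ->]].
      rewrite fr_lfold in Hj. simpl in Hj. injection Hj as <- Hj.
      exists Js. split; [exact Hj|]. split; [|split].
      * eapply E_sub; eauto.
      * eapply E_sub; eauto.
      * intros z Hz Gz Dz. apply (E_sub Atom b b). apply H3.
        rewrite fr_lfold; simpl; congruence.
        apply sub_E; auto. apply sub_E; auto.
Qed.
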